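(* Let $M$ be a Hausdorff space satisfying the first axiom of countability and the Lindelöf condition, and let $\mathcal{I}$ be a $\sigma$-ideal in the Borel $\sigma$-algebra $\mathcal{B}(M)$ containing all singletons $\{x\}$, $x\in M$. Then the quotient $\sigma$-algebra $\mathcal{B}(M)/\mathcal{I}$ has no points.
   Context: A $\sigma$-ideal $\mathcal{I}$ of a $\sigma$-algebra $\mathcal{B}$ is a nonempty subset closed under $A\mapsto A\wedge B$ ($B\in\mathcal{B}$) and under countable joins. The quotient $\mathcal{B}/\mathcal{I}$ is the set of classes of the equivalence $a\sim b\iff\exists p\in\mathcal{I}: a\vee p=b\vee p$, with the induced Boolean $\sigma$-algebra operations $[a]\vee[b]=[a\vee b]$, $[a]\wedge[b]=[a\wedge b]$, $[a]^\perp=[a^\perp]$, countable joins $\bigvee_n[a_n]=[\bigvee_n a_n]$. A point in a $\sigma$-complete lattice $\mathbb{L}$ is a nonempty subset $\mathfrak{p}$ with: (1) $0\notin\mathfrak{p}$; (2) $a,b\in\mathfrak{p}\Rightarrow a\wedge b\in\mathfrak{p}$; (3) $a\in\mathfrak{p}$, $a\le b\Rightarrow b\in\mathfrak{p}$; (4) for every countable family $(a_n)$ with $\bigvee_n a_n\in\mathfrak{p}$ there is $n$ with $a_n\in\mathfrak{p}$. *)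

(* Defs.v *)
From HB Require Import structures.
From mathcomp Require Import all_boot all_order all_algebra.
From mathcomp Require Import all_classical all_reals all_analysis.
Set Implicit Arguments. Unset Strict Implicit. Unset Printing Implicit Defensive.
Local Open Scope classical_set_scope.

Section Defs.
Variable M : topologicalType.

Definition first_countable_space : Prop :=
  forall x : M, exists B : set (set M),
    [/\ countable B, (forall U, B U -> open U /\ U x) &
        (forall N, nbhs x N -> exists2 U, B U & U `<=` N)].

Definition lindelof_space : Prop :=
  forall C : set (set M), (forall U, C U -> open U) ->
    \bigcup_(U in C) U = [set: M] ->
    exists2 D : set (set M), countable D /\ D `<=` C & \bigcup_(U in D) U = [set: M].

Definition borel_set : set (set M) := <<s open >>.

Definition sigma_ideal (I : set (set M)) : Prop :=
  [/\ I `<=` borel_set, I !=set0,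
      (forall A B, I A -> borel_set B -> I (A `&` B)) &
      (forall A : nat -> set M, (forall n, I (A n)) -> I (\bigcup_n A n))].

Definition qeq (I : set (set M)) (a b : set M) : Prop :=
  exists2 p, I p & a `|` p = b `|` p.

Definition qle (I : set (set M)) (a b : set M) : Prop := qeq I (a `&` b) a.

(* A subset of B(M)/I, represented by the (saturated) set [P] of Borel
   representatives of its classes, is a point of the sigma-complete lattice
   B(M)/I. *)
Definition quotient_point (I : set (set M)) (P : set (set M)) : Prop :=
  [/\ P `<=` borel_set,
      (forall a b, borel_set a -> borel_set b -> qeq I a b -> P a -> P b),
      P !=set0 & ~ P set0] /\
  [/\
      (forall a b, P a -> P b -> P (a `&` b)),
      (forall a b, P a -> borel_set b -> qle I a b -> P b) &
      (forall a : nat -> set M, (forall n, borel_set (a n)) ->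
          P (\bigcup_n a n) -> exists n, P (a n))].
End Defs.

(* Main.v *)
Require Import Defs.
From mathcomp Require Import all_boot all_order all_algebra.
From mathcomp Require Import all_classical all_reals all_analysis.
Local Open Scope classical_set_scope.

Lemma enum_countable_aux (T : Type) (A : set (set T)) (x0 : set T) :
  A x0 -> countable A ->
  exists e : nat -> set T, (forall n, A (e n)) /\ (forall U, A U -> exists n, e n = U).
Proof.
move=> Ax0 /countable_injP [f finj].
exists (fun n => xget x0 [set U | A U /\ f U = n]); split.
- by move=> n; case: xgetP => [y _ []|].
- move=> U AU; exists (f U); case: xgetP => [y _ [Ay fy]|NP].
    exact: finj (mem_set Ay) (mem_set AU) fy.
  by exfalso; exact: (NP U (conj AU erefl)).
Qed.

Theorem proposition3p30 (M : topologicalType) :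
  hausdorff_space M -> first_countable_space M -> lindelof_space M ->
  forall I : set (set M), sigma_ideal I -> (forall x : M, I [set x]) ->
  ~ exists P : set (set M), quotient_point I P.
Proof.
move=> hM fcM lM I [Ib I0 IA IU] Ix [P [[Pb Psat Pne P0] [PI Ple Pcup]]].
have borO U : open U -> @borel_set M U by move=> oU; exact: sub_sigma_algebra.
have borC A : @borel_set M A -> @borel_set M (~` A).
  by move=> bA; rewrite -setTD; exact: sigma_algebraCD.
have borT : @borel_set M setT.
  by rewrite -setC0; apply: borC; exact: sigma_algebra0.
have Pup a b : P a -> a `<=` b -> @borel_set M b -> P b.
  move=> Pa ab bb; apply: (Ple a b Pa bb); case: I0 => p Ip; exists p => //.
  by rewrite (setIidl ab).
have PT : P setT by case: Pne => a Pa; exact: (Pup a setT Pa (@subsetT _ a) borT).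
have key x : exists U, [/\ open U, U x & ~ P U].
  case: (fcM x) => B [cB Bo Bb].
  have [U0 BU0 _] := Bb setT filterT.
  have [e [eB esurj]] := @enum_countable_aux _ _ _ BU0 cB.
  pose a n := if n is k.+1 then ~` closure (e k) else [set x].
  have aT : \bigcup_n a n = setT.
    apply/seteqP; split => // y _.
    have [->|yx] := pselect (y = x); first by exists 0%N.
    have [A [B' [nA nB AB0]]] : exists A B', [/\ nbhs x A, nbhs y B' & A `&` B' = set0].
      apply: contrapT => H; apply: yx; apply/esym/hM => A B' nA nB.
      apply: contrapT => H0; apply: H; exists A, B'; split => //.
      by apply/seteqP; split=> // z Hz; apply: H0; exists z.
    have [U BU UA] := Bb A nA.
    have [n en] := esurj U BU.
    exists n.+1 => //=; rewrite en => cl.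
    have [z [Uz Bz]] := cl B' nB.
    have : (A `&` B') z by split => //; exact: UA.
    by rewrite AB0.
  have ab n : @borel_set M (a n).
    case: n => [|k] /=; first exact: Ib (Ix x).
    by apply: borO; rewrite openC; exact: closed_closure.
  have := Pcup a ab; rewrite aT => /(_ PT) [n Pan].
  case: n Pan => [|k] /= Pk.
    exfalso; apply: P0; apply: (Ple _ _ Pk); first exact: sigma_algebra0.
    by exists [set x]; [exact: Ix | rewrite setI0 set0U setUid].
  have [oe ex] := Bo _ (eB k).
  exists (e k); split => // Pe; apply: P0.
  have := PI _ _ Pe Pk.
  suff -> : e k `&` ~` closure (e k) = set0 by [].
  by apply/seteqP; split=> // z [ez nz]; exact: nz (subset_closure ez).
pose C := [set U | open U /\ ~ P U].
have cov : \bigcup_(U in C) U = setT.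
  apply/seteqP; split=> // x _; have [U [oU Ux nPU]] := key x.
  by exists U.
have [D [cD DC] DT] := lM C (fun U CU => CU.1) cov.
have [[U0 DU0]|D0] := pselect (D !=set0).
  have [e [eD esurj]] := @enum_countable_aux _ _ _ DU0 cD.
  have eT : \bigcup_n e n = setT.
    rewrite -DT; apply/seteqP; split => y.
      by move=> [n _ ?]; exists (e n).
    by move=> [U DU Uy]; have [n en] := esurj U DU; exists n => //; rewrite en.
  have := Pcup e (fun n => borO _ (DC _ (eD n)).1); rewrite eT => /(_ PT) [n Pn].
  exact: (DC _ (eD n)).2 Pn.
have E : (setT : set M) = set0.
  rewrite -DT; apply/seteqP; split=> // y [U DU _]; apply: D0; by exists U.
by rewrite -E in P0.
Qed.
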